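(* Let $\hbar>0$, let $N\ge1$ and times $t_1<t_2<\dots<t_N<t_{N+1}\equiv t_D$. Consider two arms $\gamma\in\{\alpha,\beta\}$ with data, for $i=1,\dots,N$: masses $m_{\gamma i}>0$, wave vectors $k_{\gamma i}\in\mathbb{R}^3$ (possibly zero), frequencies $\omega_{\gamma i}\in\mathbb{R}$ and laser phases $\varphi_{\gamma i}\in\mathbb{R}$, and initial data $(q_{\gamma 1},p_{\gamma 1})\in\mathbb{R}^3\times\mathbb{R}^3$. Define recursively, for $i=1,\dots,N$, $(q_{\gamma,i+1},p_{\gamma,i+1})$ as the position and momentum at time $t_{i+1}$ of the classical trajectory of mass $m_{\gamma i}$ (Hamiltonian $H_{m_{\gamma i}}$ of the context) which is at $(q_{\gamma i},p_{\gamma i}+\hbar k_{\gamma i})$ at time $t_i$; write $q_{\gamma D}=q_{\gamma,N+1}$, $p_{\gamma D}=p_{\gamma,N+1}$, and $S_{\gamma i}=S_{cl}(t_{i+1},t_i,q_{\gamma i},p_{\gamma i}+\hbar k_{\gamma i},m_{\gamma i})$. Let $X_D,Y_D$ be complex $3\times 3$ matrices with $X_D$ invertible, and let $\Delta\phi(q,t_D)=\Phi_\beta(q)-\Phi_\alpha(q)$ with $\Phi_\gamma$ as in the context. Then for every $q\in\mathbb{R}^3$, \[ \begin{aligned} \Delta\phi(q,t_D)={}&(p_{\beta D}-p_{\alpha D})\cdot\Big(q-\frac{q_{\alpha D}+q_{\beta D}}{2}\Big)/\hbar-\frac{p_{\alpha 1}+p_{\beta 1}}{2\hbar}\cdot(q_{\beta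 1}-q_{\alpha 1})\\ &+\sum_{i=1}^N\Big[(k_{\beta i}-k_{\alpha i})\cdot\frac{q_{\alpha i}+q_{\beta i}}{2}-(\omega_{\beta i}-\omega_{\alpha i})\,t_i-(\varphi_{\beta i}-\varphi_{\alpha i})\Big]\\ &+\sum_{i=1}^N\Big(\frac{m_{\beta i}}{m_{\alpha i}}-1\Big)\Big[\frac{S_{\alpha i}}{\hbar}+\frac{p_{\alpha,i+1}}{2\hbar}\cdot(q_{\beta,i+1}-q_{\alpha,i+1})-\frac{p_{\alpha i}+\hbar k_{\alpha i}}{2\hbar}\cdot(q_{\beta i}-q_{\alpha i})\Big]\\ &+\frac{m_{\beta N}}{2\hbar}(q-q_{\beta D})\cdot\mathrm{Re}(Y_DX_D^{-1})(q-q_{\beta D})-\frac{m_{\alpha N}}{2\hbar}(q-q_{\alpha D})\cdot\mathrm{Re}(Y_DX_D^{-1})(q-q_{\alpha D}). \end{aligned} \]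
   Context: For a particle of mass $m>0$ with position $q\in\mathbb{R}^3$ and momentum $p\in\mathbb{R}^3$, the external Hamiltonian is \[ H_m(q,p,t)=\frac{1}{2m}\,p\cdot G(t)\,p-\frac{m}{2}\,q\cdot\Gamma(t)\,q-\Omega(t)\cdot(q\times p)-m\,g(t)\cdot q, \] with $G(t)$ continuous real symmetric invertible $3\times3$ matrices, $\Gamma(t)$ continuous real symmetric $3\times3$ matrices, $\Omega(t),g(t)\in\mathbb{R}^3$ continuous, the same for all masses. Classical trajectories solve Hamilton's equations for $H_m$, and $S_{cl}(s',s,q_0,p_0,m)=\int_s^{s'}(p\cdot\dot q-H_m)\,dt$ along the classical trajectory of mass $m$ starting at $(q_0,p_0)$ at time $s$. Model of the interferometer (Gaussian wave packets, beam splitters acting as the factor $e^{-i(\omega t_i-k\cdot q_{i}+\varphi)}$ at the interaction point $(t_i,q_i)$ and imparting momentum $\hbar k$, common complex width parameters $X_D,Y_D$ at detection): the output phase of arm $\gamma$ at position $q$ and time $t_D$ is \[ \Phi_\gamma(q)=\sum_{i=1}^N\Big[\frac{S_{\gamma i}}{\hbar}+k_{\gamma i}\cdot q_{\gamma i}-\omega_{\gamma i}t_i-\varphi_{\gamma i}\Big]+\frac{p_{\gamma D}\cdot(q-q_{\gamma D})}{\hbar}+\frac{m_{\gamma N}}{2\hbar}(q-q_{\gamma D})\cdot\mathrm{Re}(Y_DX_D^{-1})(q-q_{\gamma D}), \] and $\Delta\phi(q,t_D)=\Phi_\beta(q)-\Phi_\alpha(q)$ is the interferometer phase shift. A dot denotes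 the Euclidean inner product; $\mathrm{Re}$ is the entrywise real part. *)

(* Defs.v *)
From HB Require Import structures.
From mathcomp Require Import all_boot all_order all_algebra.
From mathcomp Require Import all_classical all_reals all_analysis.
From mathcomp Require Import complex.
Set Implicit Arguments. Unset Strict Implicit. Unset Printing Implicit Defensive.
Import Order.TTheory GRing.Theory Num.Theory.
Import numFieldNormedType.Exports.
Local Open Scope classical_set_scope.
Local Open Scope ring_scope.

Section Defs.
Variable R : realType.
Local Notation vec := 'cV[R]_3.
Local Notation mat := 'M[R]_3.

Definition dotv (u v : vec) : R := \sum_(i < 3) u i 0 * v i 0.

Definition crossv (u v : vec) : vec :=
  \col_(i < 3)
    (if i == 0 :> nat then u 1 0 * v 2%:R 0 - u 2%:R 0 * v 1 0
     else if i == 1 :> nat then u 2%:R 0 * v 0 0 - u 0 0 * v 2%:R 0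
     else u 0 0 * v 1 0 - u 1 0 * v 0 0).

Definition Ham (G Gam : R -> mat) (Om g : R -> vec) (m : R)
  (q p : vec) (t : R) : R :=
  (2 * m)^-1 * dotv p (G t *m p) - m / 2 * dotv q (Gam t *m q)
  - dotv (Om t) (crossv q p) - m * dotv (g t) q.

(* (q,p) : R -> R^3 x R^3 solves Hamilton's equations for H_m on all of R:
   dq/dt = grad_p H_m and dp/dt = - grad_q H_m, the gradients being
   expressed through directional derivatives along every v. *)
Definition hamilton_sol (G Gam : R -> mat) (Om g : R -> vec) (m : R)
  (q p : R -> vec) : Prop :=
  forall t : R,
    derivable q t 1 /\ derivable p t 1 /\
    forall v : vec,
      is_derive (p t) v (fun p' => Ham G Gam Om g m (q t) p' t)
                (dotv ('D_1 q t) v) /\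
      is_derive (q t) v (fun q' => Ham G Gam Om g m q' (p t) t)
                (- dotv ('D_1 p t) v).

Definition action (G Gam : R -> mat) (Om g : R -> vec) (m : R)
  (q p : R -> vec) (s s' : R) : R :=
  \int[lebesgue_measure]_(t in `[s, s']) (dotv (p t) ('D_1 q t)
                                           - Ham G Gam Om g m (q t) (p t) t).

(* Output phase of one arm (context formula).  Indices i = 1..N;
   qs i, ps i = (q_{gamma i}, p_{gamma i}), qs N.+1 = q_{gamma D}, etc.;
   S i = S_{gamma i}; Z = Re(Y_D X_D^{-1}). *)
Definition Phi (hbar : R) (N : nat) (t : nat -> R) (m : nat -> R)
  (k : nat -> vec) (om ph : nat -> R) (qs ps : nat -> vec) (S : nat -> R)
  (Z : mat) (q : vec) : R :=
  \sum_(1 <= i < N.+1) (S i / hbar + dotv (k i) (qs i) - om i * t i - ph i)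
  + dotv (ps N.+1) (q - qs N.+1) / hbar
  + m N / (2 * hbar) * dotv (q - qs N.+1) (Z *m (q - qs N.+1)).

Definition ReYXinv (X Y : 'M[R[i]]_3) : mat :=
  map_mx (@complex.Re R) (Y *m invmx X).

End Defs.

(* Main.v *)
Require Import Defs.
From HB Require Import structures.
From mathcomp Require Import all_boot all_order all_algebra.
From mathcomp Require Import all_classical all_reals all_analysis.
From mathcomp Require Import complex.
From mathcomp Require Import ring lra.
Import Order.TTheory GRing.Theory Num.Theory.
Import numFieldNormedType.Exports.
Local Open Scope classical_set_scope.
Local Open Scope ring_scope.

Lemma quad_is_derive (R : realType) (V : normedModType R) (f : V -> R) (a v : V) (A B : R) :
  (forall h : R, f (h *: v + a) = f a + h * A + h ^+ 2 * B) ->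
  is_derive a v f A.
Proof.
move=> Hf.
have E : {near (0:R)^', (fun h : R => A + h * B) =1
     (fun h : R => h^-1 *: ((f \o shift a) (h *: v) - f a))}.
  near=> h; rewrite /= /shift Hf.
  have h0 : h != 0 by near: h; exact: nbhs_dnbhs_neq.
  rewrite /GRing.scale /= expr2; field; exact: h0.
have Hc : (fun h : R => A + h * B) @ 0^' --> A.
  have : {for 0, continuous (fun h : R => A + h * B)}.
    apply: continuousD; first exact: cvg_cst.
    apply: continuousM; [exact: cvg_id|exact: cvg_cst].
  move/continuous_withinNx; rewrite mul0r addr0; exact.
have cv : (fun h : R => h^-1 *: ((f \o shift a) (h *: v) - f a)) @ 0^' --> A.
  exact: cvg_trans (near_eq_cvg E) Hc.
apply: DeriveDef; first exact: cvgP cv.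
exact: cvg_lim.
Unshelve. all: by end_near.
Qed.

Section S.
Variable R : realType.
Local Notation vec := 'cV[R]_3.
Local Notation mat := 'M[R]_3.

Lemma sum3 (F : 'I_3 -> R) : \sum_(i < 3) F i = F 0 + F 1 + F 2%:R.
Proof.
rewrite !big_ord_recl big_ord0 addr0 addrA; congr (_ + F _ + F _); exact/val_inj.
Qed.

Lemma cross0 (u v : vec) : crossv u v 0 0 = u 1 0 * v 2%:R 0 - u 2%:R 0 * v 1 0.
Proof. by rewrite mxE. Qed.
Lemma cross1 (u v : vec) : crossv u v 1 0 = u 2%:R 0 * v 0 0 - u 0 0 * v 2%:R 0.
Proof. by rewrite mxE. Qed.
Lemma cross2 (u v : vec) : crossv u v 2%:R 0 = u 0 0 * v 1 0 - u 1 0 * v 0 0.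
Proof. by rewrite mxE. Qed.

Ltac expand := rewrite /Ham /dotv ?(sum3, cross0, cross1, cross2, mxE).

Definition dHp (G : R -> mat) (Om : R -> vec) (m : R) (q p : vec) (t : R) (v : vec) :=
  (2 * m)^-1 * (dotv v (G t *m p) + dotv p (G t *m v)) - dotv (Om t) (crossv q v).

Definition dHq (Gam : R -> mat) (Om g : R -> vec) (m : R) (q p : vec) (t : R) (v : vec) :=
  - (m / 2) * (dotv v (Gam t *m q) + dotv q (Gam t *m v)) - dotv (Om t) (crossv v p)
  - m * dotv (g t) v.

Lemma Ham_p G Gam Om g m q p t v (h : R) :
  Ham G Gam Om g m q (h *: v + p) t = Ham G Gam Om g m q p t + h * dHp G Om m q p t v
    + h ^+ 2 * ((2 * m)^-1 * dotv v (G t *m v)).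
Proof. rewrite /dHp; expand. ring. Qed.

Lemma Ham_q G Gam Om g m q p t v (h : R) :
  Ham G Gam Om g m (h *: v + q) p t = Ham G Gam Om g m q p t + h * dHq Gam Om g m q p t v
    + h ^+ 2 * (- (m / 2) * dotv v (Gam t *m v)).
Proof. rewrite /dHq; expand. ring. Qed.



Lemma ham_dq G Gam Om g m q p t v :
  hamilton_sol G Gam Om g m q p ->
  dotv ('D_1 q t) v = dHp G Om m (q t) (p t) t v.
Proof.
move=> /(_ t) [_ [_ /(_ v) [H1 _]]].
have H2 := @quad_is_derive R _ (fun p' => Ham G Gam Om g m (q t) p' t) (p t) v _ _ (Ham_p G Gam Om g m (q t) (p t) t v).
by rewrite -(@derive_val _ _ _ _ _ _ _ H1) (@derive_val _ _ _ _ _ _ _ H2).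
Qed.

Lemma ham_dp G Gam Om g m q p t v :
  hamilton_sol G Gam Om g m q p ->
  dotv ('D_1 p t) v = - dHq Gam Om g m (q t) (p t) t v.
Proof.
move=> /(_ t) [_ [_ /(_ v) [_ H1]]].
have H2 := @quad_is_derive R _ (fun q' => Ham G Gam Om g m q' (p t) t) (q t) v _ _ (Ham_q G Gam Om g m (q t) (p t) t v).
by rewrite -(@derive_val _ _ _ _ _ _ _ H2) (@derive_val _ _ _ _ _ _ _ H1) opprK.
Qed.

Lemma entry_derive (u : R -> vec) t i :
  derivable u t 1 -> is_derive t 1 (fun x => u x i 0) ('D_1 u t i 0).
Proof.
move=> du; split; first exact: ((derivable_mxP _ _ _).1 du i 0).
by rewrite derive_mx // mxE.
Qed.

Lemma dotv_derive (u w : R -> vec) t :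
  derivable u t 1 -> derivable w t 1 ->
  is_derive t 1 (fun x => dotv (u x) (w x)) (dotv ('D_1 u t) (w t) + dotv (u t) ('D_1 w t)).
Proof.
move=> du dw.
have E : (fun x => dotv (u x) (w x)) =
  (fun x => u x 0 0) * (fun x => w x 0 0) + (fun x => u x 1 0) * (fun x => w x 1 0)
  + (fun x => u x 2%:R 0) * (fun x => w x 2%:R 0).
  by apply/funext => x; rewrite /dotv sum3.
rewrite E.
apply: (is_derive_eq (is_deriveD (is_deriveD
  (is_deriveM (entry_derive _ _ 0 du) (entry_derive _ _ 0 dw))
  (is_deriveM (entry_derive _ _ 1 du) (entry_derive _ _ 1 dw)))
  (is_deriveM (entry_derive _ _ 2%:R du) (entry_derive _ _ 2%:R dw)))).
rewrite /dotv !sum3 /GRing.scale /=. ring.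
Qed.

Lemma dotvC (u v : vec) : dotv u v = dotv v u.
Proof. rewrite /dotv; apply: eq_bigr => i _; exact: mulrC. Qed.
Lemma dotvDl (u w v : vec) : dotv (u + w) v = dotv u v + dotv w v.
Proof. expand; ring. Qed.
Lemma dotvBl (u w v : vec) : dotv (u - w) v = dotv u v - dotv w v.
Proof. expand; ring. Qed.
Lemma dotvZl c (u v : vec) : dotv (c *: u) v = c * dotv u v.
Proof. expand; ring. Qed.

Lemma key_alg G Gam Om g ma mb (qa pa qb pb : vec) t : ma != 0 -> mb != 0 ->
  2^-1 * ( (ma / mb) * (- dHq Gam Om g mb qb pb t (qb - qa)) + (- dHq Gam Om g ma qa pa t (qb - qa))
         + (dHp G Om mb qb pb t ((ma / mb) *: pb + pa) - dHp G Om ma qa pa t ((ma / mb) *: pb + pa)))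
  = (ma / mb) * (dHp G Om mb qb pb t pb - Ham G Gam Om g mb qb pb t)
    - (dHp G Om ma qa pa t pa - Ham G Gam Om g ma qa pa t).
Proof.
move=> a0 b0; rewrite /dHp /dHq; expand. field. by rewrite a0 b0.
Qed.

Lemma cont_entry m n (u : R -> 'M[R]_(m,n)) x i j :
  {for x, continuous u} -> {for x, continuous (fun y => u y i j)}.
Proof.
move=> cu; have h := @coord_continuous R m n i j (u x).
exact: (continuous_comp (g := fun M : 'M[R]_(m,n) => M i j) cu h).
Qed.


Lemma cont_dot (u w : R -> vec) x : {for x, continuous u} -> {for x, continuous w} ->
  {for x, continuous (fun y => dotv (u y) (w y))}.
Proof.
move=> cu cw.
have -> : (fun y => dotv (u y) (w y)) = (fun y => u y 0 0 * w y 0 0 + u y 1 0 * w y 1 0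
   + u y 2%:R 0 * w y 2%:R 0) by apply/funext=> y; rewrite /dotv sum3.
pose U i := cont_entry _ _ _ _ i 0 cu. pose W i := cont_entry _ _ _ _ i 0 cw.
exact: (continuousD (continuousD (continuousM (U 0) (W 0)) (continuousM (U 1) (W 1)))
   (continuousM (U 2%:R) (W 2%:R))).
Qed.

Lemma cont_dotM (u w : R -> vec) (A : R -> mat) x : {for x, continuous u} ->
  {for x, continuous A} -> {for x, continuous w} ->
  {for x, continuous (fun y => dotv (u y) (A y *m w y))}.
Proof.
move=> cu cA cw.
have -> : (fun y => dotv (u y) (A y *m w y)) = (fun y =>
   u y 0 0 * (A y 0 0 * w y 0 0 + A y 0 1 * w y 1 0 + A y 0 2%:R * w y 2%:R 0)
 + u y 1 0 * (A y 1 0 * w y 0 0 + A y 1 1 * w y 1 0 + A y 1 2%:R * w y 2%:R 0)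
 + u y 2%:R 0 * (A y 2%:R 0 * w y 0 0 + A y 2%:R 1 * w y 1 0 + A y 2%:R 2%:R * w y 2%:R 0)).
  by apply/funext=> y; rewrite /dotv !sum3 !mxE !sum3.
pose U i := cont_entry _ _ _ _ i 0 cu. pose W i := cont_entry _ _ _ _ i 0 cw.
pose AA i j := cont_entry _ _ _ _ i j cA.
pose row i := continuousD (continuousD (continuousM (AA i 0) (W 0)) (continuousM (AA i 1) (W 1)))
   (continuousM (AA i 2%:R) (W 2%:R)).
exact: (continuousD (continuousD (continuousM (U 0) (row 0)) (continuousM (U 1) (row 1)))
   (continuousM (U 2%:R) (row 2%:R))).
Qed.

Lemma cont_dotX (a u w : R -> vec) x : {for x, continuous a} ->
  {for x, continuous u} -> {for x, continuous w} ->
  {for x, continuous (fun y => dotv (a y) (crossv (u y) (w y)))}.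
Proof.
move=> ca cu cw.
have -> : (fun y => dotv (a y) (crossv (u y) (w y))) = (fun y =>
   a y 0 0 * (u y 1 0 * w y 2%:R 0 + - (u y 2%:R 0 * w y 1 0))
 + a y 1 0 * (u y 2%:R 0 * w y 0 0 + - (u y 0 0 * w y 2%:R 0))
 + a y 2%:R 0 * (u y 0 0 * w y 1 0 + - (u y 1 0 * w y 0 0))).
  by apply/funext=> y; rewrite /dotv !sum3 cross0 cross1 cross2.
pose A i := cont_entry _ _ _ _ i 0 ca.
pose U i := cont_entry _ _ _ _ i 0 cu. pose W i := cont_entry _ _ _ _ i 0 cw.
pose P i j := continuousM (U i) (W j).
exact: (continuousD (continuousD
   (continuousM (A 0) (continuousD (P 1 2%:R) (continuousN (P 2%:R 1))))
   (continuousM (A 1) (continuousD (P 2%:R 0) (continuousN (P 0 2%:R)))))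
   (continuousM (A 2%:R) (continuousD (P 0 1) (continuousN (P 1 0))))).
Qed.

Lemma der_cont (u : R -> vec) x : derivable u x 1 -> {for x, continuous u}.
Proof. by move=> /derivable1_diffP /differentiable_continuous. Qed.

Definition Lag G Gam Om g m (q p : R -> vec) t :=
  dHp G Om m (q t) (p t) t (p t) - Ham G Gam Om g m (q t) (p t) t.

Lemma action_Lag G Gam Om g m q p s s' : hamilton_sol G Gam Om g m q p ->
  action G Gam Om g m q p s s' = \int[lebesgue_measure]_(t in `[s, s']) Lag G Gam Om g m q p t.
Proof.
move=> H; rewrite /action; congr Rintegral; apply/funext => t.
by rewrite /Lag dotvC (ham_dq _ _ _ _ _ _ _ _ _ H).
Qed.

Lemma Lag_cont G Gam Om g m q p : continuous G -> continuous Gam -> continuous Om -> continuous g ->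
  hamilton_sol G Gam Om g m q p -> continuous (Lag G Gam Om g m q p).
Proof.
move=> cG cGam cOm cg H x.
have cq := der_cont _ _ (H x).1.
have cp := der_cont _ _ (H x).2.1.
have cGx := cG x. have cGamx := cGam x. have cOmx := cOm x. have cgx := cg x.
rewrite /Lag /dHp /Ham.
have c1 := cont_dotM _ _ _ _ cp cGx cp.
have c2 := cont_dotX _ _ _ _ cOmx cq cp.
have c3 := cont_dotM _ _ _ _ cq cGamx cq.
have c4 := cont_dot _ _ _ cgx cq.
have K : forall c : R, {for x, continuous (fun _ : R => c)} by move=> c; exact: cvg_cst.
have dHpc := continuousD (continuousM (K (2 * m)^-1) (continuousD c1 c1)) (continuousN c2).
have Hamc := continuousD (continuousD (continuousD (continuousM (K (2 * m)^-1) c1)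
   (continuousN (continuousM (K (m / 2)) c3))) (continuousN c2)) (continuousN (continuousM (K m) c4)).
exact (continuousD dHpc (continuousN Hamc)).
Qed.

Lemma dotv_is_derive (u w : R -> vec) t du dw :
  is_derive t (1:R) u du -> is_derive t (1:R) w dw ->
  is_derive t 1 (fun x => dotv (u x) (w x)) (dotv du (w t) + dotv (u t) dw).
Proof. by case=> hu <-; case=> hw <-; exact: dotv_derive. Qed.

Lemma cont_integrable (f : R -> R) (a b : R) : continuous f ->
  lebesgue_measure.-integrable `[a, b] (EFin \o f).
Proof.
move=> cf; apply: continuous_compact_integrable; first exact: segment_compact.
exact: continuous_subspaceT.
Qed.

Lemma action_diff (G Gam : R -> mat) (Om g : R -> vec) (ma mb : R) (qa pa qb pb : R -> vec) (s s' : R) :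
  continuous G -> continuous Gam -> continuous Om -> continuous g ->
  ma != 0 -> mb != 0 -> s < s' ->
  hamilton_sol G Gam Om g ma qa pa -> hamilton_sol G Gam Om g mb qb pb ->
  (ma / mb) * action G Gam Om g mb qb pb s s' - action G Gam Om g ma qa pa s s' =
  2^-1 * dotv ((ma / mb) *: pb s' + pa s') (qb s' - qa s')
  - 2^-1 * dotv ((ma / mb) *: pb s + pa s) (qb s - qa s).
Proof.
move=> cG cGam cOm cg a0 b0 ss' Ha Hb.
rewrite (action_Lag _ _ _ _ _ _ _ _ _ Ha) (action_Lag _ _ _ _ _ _ _ _ _ Hb).
set La := Lag G Gam Om g ma qa pa.
set Lb := Lag G Gam Om g mb qb pb.
have cLa : continuous La by exact: Lag_cont.
have cLb : continuous Lb by exact: Lag_cont.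
have cLb' : continuous (fun x => ma / mb * Lb x).
  move=> x.
  have K : {for x, continuous (fun _ : R => ma / mb)} by exact: cvg_cst.
  exact (continuousM K (cLb x)).
have cf : continuous (fun x => ma / mb * Lb x - La x).
  move=> x; exact (continuousD (cLb' x) (continuousN (cLa x))).
rewrite -RintegralZl //; last exact: cont_integrable.
rewrite -RintegralB //; [|exact: cont_integrable|exact: cont_integrable].
set F := fun t => 2^-1 * dotv ((ma / mb) *: pb t + pa t) (qb t - qa t).
have dF : forall t : R, is_derive t (1 : R) F (ma / mb * Lb t - La t).
  move=> t.
  have [dqa [dpa _]] := Ha t.
  have [dqb [dpb _]] := Hb t.
  have iU : is_derive t (1:R) ((ma / mb) \*: pb + pa) ((ma / mb) *: 'D_1 pb t + 'D_1 pa t).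
    exact: (is_deriveD (is_deriveZ (ma / mb) (derivableP dpb)) (derivableP dpa)).
  have iW : is_derive t (1:R) (qb - qa) ('D_1 qb t - 'D_1 qa t).
    exact: (is_deriveB (derivableP dqb) (derivableP dqa)).
  have H := dotv_is_derive _ _ _ _ _ iU iW.
  have H2 : is_derive t (1:R) F (2^-1 *: (dotv ((ma / mb) *: 'D_1 pb t + 'D_1 pa t) (qb t - qa t)
     + dotv ((ma / mb) *: pb t + pa t) ('D_1 qb t - 'D_1 qa t))) := is_deriveZ (2^-1) H.
  apply: (is_derive_eq H2).
  rewrite /GRing.scale /=.
  rewrite dotvDl dotvZl (dotvC _ ('D_1 qb t - 'D_1 qa t)) dotvBl.
  rewrite (ham_dq _ _ _ _ _ _ _ _ _ Hb) (ham_dq _ _ _ _ _ _ _ _ _ Ha).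
  rewrite (ham_dp _ _ _ _ _ _ _ _ _ Hb) (ham_dp _ _ _ _ _ _ _ _ _ Ha).
  by rewrite /Lb /La /Lag -key_alg.
have dFo : derivable_oo_LRcontinuous F s s'.
  split.
  - by move=> x _; exact: (@ex_derive _ _ _ _ _ _ _ (dF x)).
  - apply: cvg_at_right_filter.
    exact/differentiable_continuous/derivable1_diffP/(@ex_derive _ _ _ _ _ _ _ (dF s)).
  - apply: cvg_at_left_filter.
    exact/differentiable_continuous/derivable1_diffP/(@ex_derive _ _ _ _ _ _ _ (dF s')).
have dFe : {in `]s, s'[, forall x, derive1 F x = ma / mb * Lb x - La x}.
  by move=> x _; rewrite derive1E; exact: (@derive_val _ _ _ _ _ _ _ (dF x)).
have := continuous_FTC2 ss' (continuous_subspaceT cf) dFo dFe.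
rewrite /Rintegral => ->.
by [].
Qed.

Lemma step_alg (h ma mb Sa Sb oa ob fa fb tj : R) (qa pa ka qb pb kb qa' pa' qb' pb' : vec) :
 h != 0 -> ma != 0 -> mb != 0 ->
 (ma / mb) * Sb - Sa = 2^-1 * dotv ((ma / mb) *: pb' + pa') (qb' - qa')
   - 2^-1 * dotv ((ma / mb) *: (pb + h *: kb) + (pa + h *: ka)) (qb - qa) ->
 (Sb / h + dotv kb qb - ob * tj - fb) - (Sa / h + dotv ka qa - oa * tj - fa)
 = (dotv (kb - ka) (2^-1 *: (qa + qb)) - (ob - oa) * tj - (fb - fa))
 + (mb / ma - 1) * (Sa / h + dotv ((2 * h)^-1 *: pa') (qb' - qa')
                    - dotv ((2 * h)^-1 *: (pa + h *: ka)) (qb - qa))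
 + (dotv ((2 * h)^-1 *: (pa' + pb')) (qb' - qa') - dotv ((2 * h)^-1 *: (pa + pb)) (qb - qa)).
Proof.
move=> h0 a0 b0 E.
have -> : Sb = (mb / ma) * (Sa + (2^-1 * dotv ((ma / mb) *: pb' + pa') (qb' - qa')
   - 2^-1 * dotv ((ma / mb) *: (pb + h *: kb) + (pa + h *: ka)) (qb - qa))).
  by rewrite -E; field; rewrite a0 b0.
expand. field. by rewrite h0 a0 b0.
Qed.

Lemma final_alg (h Sb_ Sa_ SA SM ZB ZA : R) (pbD paD qbD qaD pb1 pa1 qb1 qa1 q : vec) :
  h != 0 ->
  Sb_ - Sa_ = SA + SM + (dotv ((2 * h)^-1 *: (paD + pbD)) (qbD - qaD)
                         - dotv ((2 * h)^-1 *: (pa1 + pb1)) (qb1 - qa1)) ->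
  (Sb_ + dotv pbD (q - qbD) / h + ZB) - (Sa_ + dotv paD (q - qaD) / h + ZA)
  = dotv (pbD - paD) (q - 2^-1 *: (qaD + qbD)) / h
    - dotv ((2 * h)^-1 *: (pa1 + pb1)) (qb1 - qa1) + SA + SM + ZB - ZA.
Proof.
move=> h0 E.
have -> : Sb_ = Sa_ + (SA + SM + (dotv ((2 * h)^-1 *: (paD + pbD)) (qbD - qaD)
                         - dotv ((2 * h)^-1 *: (pa1 + pb1)) (qb1 - qa1))) by rewrite -E; ring.
expand. field. exact: h0.
Qed.
End S.

Arguments action_diff {R}. Arguments step_alg {R}. Arguments final_alg {R}.
Theorem theorem2 (R : realType) (hbar : R) (N : nat) (t : nat -> R)
  (G Gam : R -> 'M[R]_3) (Om g : R -> 'cV[R]_3)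
  (ma : nat -> R) (ka : nat -> 'cV[R]_3) (oma pha : nat -> R)
  (qa pa : nat -> 'cV[R]_3) (qta pta : nat -> R -> 'cV[R]_3)
  (mb : nat -> R) (kb : nat -> 'cV[R]_3) (omb phb : nat -> R)
  (qb pb : nat -> 'cV[R]_3) (qtb ptb : nat -> R -> 'cV[R]_3)
  (X Y : 'M[R[i]]_3) :
  (* standing assumptions on the external fields *)
  continuous G -> continuous Gam -> continuous Om -> continuous g ->
  (forall s, (G s)^T = G s /\ G s \in unitmx) ->
  (forall s, (Gam s)^T = Gam s) ->
  (* hbar > 0, N >= 1, t_1 < ... < t_N < t_{N+1} = t_D *)
  0 < hbar -> (1 <= N)%N ->
  (forall j, (1 <= j <= N)%N -> t j < t j.+1) ->
  (* arm alpha: masses, classical trajectories and recursion *)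
  (forall j, (1 <= j <= N)%N ->
     0 < ma j /\ hamilton_sol G Gam Om g (ma j) (qta j) (pta j) /\
     qta j (t j) = qa j /\ pta j (t j) = pa j + hbar *: ka j /\
     qa j.+1 = qta j (t j.+1) /\ pa j.+1 = pta j (t j.+1)) ->
  (* arm beta *)
  (forall j, (1 <= j <= N)%N ->
     0 < mb j /\ hamilton_sol G Gam Om g (mb j) (qtb j) (ptb j) /\
     qtb j (t j) = qb j /\ ptb j (t j) = pb j + hbar *: kb j /\
     qb j.+1 = qtb j (t j.+1) /\ pb j.+1 = ptb j (t j.+1)) ->
  X \in unitmx ->
  let Sa := fun j => action G Gam Om g (ma j) (qta j) (pta j) (t j) (t j.+1) in
  let Sb := fun j => action G Gam Om g (mb j) (qtb j) (ptb j) (t j) (t j.+1) in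
  let Z := ReYXinv X Y in
  forall q : 'cV[R]_3,
    Phi hbar N t mb kb omb phb qb pb Sb Z q
    - Phi hbar N t ma ka oma pha qa pa Sa Z q
  = dotv (pb N.+1 - pa N.+1) (q - 2^-1 *: (qa N.+1 + qb N.+1)) / hbar
    - dotv ((2 * hbar)^-1 *: (pa 1%N + pb 1%N)) (qb 1%N - qa 1%N)
    + \sum_(1 <= j < N.+1)
        (dotv (kb j - ka j) (2^-1 *: (qa j + qb j))
         - (omb j - oma j) * t j - (phb j - pha j))
    + \sum_(1 <= j < N.+1)
        ((mb j / ma j - 1) *
         (Sa j / hbar
          + dotv ((2 * hbar)^-1 *: pa j.+1) (qb j.+1 - qa j.+1)
          - dotv ((2 * hbar)^-1 *: (pa j + hbar *: ka j)) (qb j - qa j)))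
    + mb N / (2 * hbar) * dotv (q - qb N.+1) (Z *m (q - qb N.+1))
    - ma N / (2 * hbar) * dotv (q - qa N.+1) (Z *m (q - qa N.+1)).

Proof.
move=> cG cGam cOm cg _ _ hpos N1 tinc HA HB _ Sa Sb Z q.
have h0 : hbar != 0 by rewrite gt_eqF.
have step : forall j, (1 <= j < N.+1)%N ->
   (Sb j / hbar + dotv (kb j) (qb j) - omb j * t j - phb j)
   - (Sa j / hbar + dotv (ka j) (qa j) - oma j * t j - pha j)
 = (dotv (kb j - ka j) (2^-1 *: (qa j + qb j)) - (omb j - oma j) * t j - (phb j - pha j))
 + (mb j / ma j - 1) * (Sa j / hbar + dotv ((2 * hbar)^-1 *: pa j.+1) (qb j.+1 - qa j.+1)
                    - dotv ((2 * hbar)^-1 *: (pa j + hbar *: ka j)) (qb j - qa j))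
 + (dotv ((2 * hbar)^-1 *: (pa j.+1 + pb j.+1)) (qb j.+1 - qa j.+1)
    - dotv ((2 * hbar)^-1 *: (pa j + pb j)) (qb j - qa j)).
  move=> j hj.
  have [ma0 [Ha [qa0 [pa0 [qa1 pa1]]]]] := HA j hj.
  have [mb0 [Hb [qb0 [pb0 [qb1 pb1]]]]] := HB j hj.
  have ma0' : ma j != 0 by rewrite gt_eqF.
  have mb0' : mb j != 0 by rewrite gt_eqF.
  have E := action_diff _ _ _ _ _ _ _ _ _ _ _ _ cG cGam cOm cg ma0' mb0' (tinc j hj) Ha Hb.
  rewrite -qa1 -pa1 -qb1 -pb1 qa0 pa0 qb0 pb0 in E.
  exact: (step_alg _ _ _ _ _ _ _ _ _ _ _ _ _ _ _ _ _ _ _ _ h0 ma0' mb0' E).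
rewrite /Phi.
apply: final_alg => //.
rewrite -sumrB (eq_big_nat _ _ step) big_split big_split /=.
by rewrite telescope_sumr.
Qed.
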